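(* In the quantum disk setting of the context, let $\alpha,\beta\in\mathbb{C}$ and $\delta\in\mathbb R\setminus\{0\}$ satisfy $\delta^2q\alpha=-\beta^*$. Then $\mathcal{J}(\xi\triangleright\phi)=\triangleright\sigma_{\mathcal{S}}(\mathcal{J}\phi\otimes\xi^* )$ for all $\xi\in\Omega^1$, $\phi\in\mathcal{S}$, and the operators $D=\triangleright\circ\nabla_{\mathcal{S}}$ (explicitly $D(a s)=\beta\frac{\partial a}{\partial\bar z}w\,\bar s$, $D(a\bar s)=\alpha\frac{\partial a}{\partial z}w\,s$), $\mathcal{J}$ and $\gamma$ satisfy $\mathcal J^2=-1$, $\mathcal J\gamma=-\gamma\mathcal J$, $\gamma^2=1$, $[\gamma,a]=0$, $D\gamma=-\gamma D$, $[a,\mathcal J b\mathcal J^{-1}]=0$, $\mathcal J D=D\mathcal J$ and $[[D,a],\mathcal J b\mathcal J^{-1}]=0$ for all $a,b\in\mathbb C_q[D]$.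
   Context: $q$ is real nonzero. $\mathbb{C}_q[D]$ is the $*$-algebra generated by $z,\bar z$ with $z\bar z=q^{-2}\bar zz-q^{-2}+1$, $z^*=\bar z$, $\mathbb Z$-graded by $|z|=1$, $|\bar z|=-1$; $w=1-\bar zz$. Its $*$-calculus has $\Omega^1$ free as a left module on ${\rm d}z,{\rm d}\bar z$ with $z\,{\rm d}z=q^{-2}{\rm d}z\,z$, $z\,{\rm d}\bar z=q^{-2}{\rm d}\bar z\,z$, $\bar z\,{\rm d}z=q^2{\rm d}z\,\bar z$, $\bar z\,{\rm d}\bar z=q^2{\rm d}\bar z\,\bar z$, ${\rm d}z\wedge{\rm d}\bar z=-q^{-2}{\rm d}\bar z\wedge{\rm d}z$, ${\rm d}z\wedge{\rm d}z={\rm d}\bar z\wedge{\rm d}\bar z=0$; write ${\rm d}a=\frac{\partial a}{\partial z}{\rm d}z+\frac{\partial a}{\partial\bar z}{\rm d}\bar z$. The spinor bimodule $\mathcal S$ is the free left module on $s,\bar s$ with $s.a=q^{|a|}a.s$, $\bar s.a=q^{|a|}a.\bar s$ for homogeneous $a$. The connection: $\nabla_{\mathcal S}(as+b\bar s)={\rm d}a\otimes s+{\rm d}b\otimes\bar s$, with $\sigma_{\mathcal S}(s\otimes{\rm d}a)=q^{|a|}{\rm d}a\otimes s$, $\sigma_{\mathcal S}(\bar s\otimes{\rm d}a)=q^{|a|}{\rm d}a\otimes\bar s$. The Clifford action is the bimodule map with ${\rm d}z\triangleright\bar s=\alpha ws$, ${\rm d}\bar z\triangleright s=\beta w\bar s$,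 ${\rm d}z\triangleright s={\rm d}\bar z\triangleright\bar s=0$. $\gamma$ is the bimodule map with $\gamma(s)=s$, $\gamma(\bar s)=-\bar s$. $\mathcal J$ is the antilinear map with $\mathcal J(s)=\delta\bar s$, $\mathcal J(\bar s)=-\delta^{-1}s$, $\mathcal J(a.\phi)=\mathcal J(\phi).a^*$, $\mathcal J(\phi.a)=a^*.\mathcal J(\phi)$. *)

(* Defs.v *)
From HB Require Import structures.
From mathcomp Require Import all_boot all_order all_algebra.
Set Implicit Arguments. Unset Strict Implicit. Unset Printing Implicit Defensive.
Import Order.TTheory GRing.Theory Num.Theory.
Local Open Scope ring_scope.

(* Data of the quantum disk C_q[D] over a numeric closed field C (e.g. the
   complex numbers) together with its first-order *-calculus.
   - qA is the algebra, qstar its *-involution, qz / qzb the generators z, zbar;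
   - qsig is the degree automorphism  a |-> q^{|a|} a  (on homogeneous a),
     i.e. the unique algebra map with z |-> q z, zbar |-> q^-1 zbar;
   - qdz, qdzb are the partial derivatives: d a = qdz a dz + qdzb a dzbar.
   Since Omega^1 is free on dz, dzbar with  dz.a = q^{2|a|} a.dz  (and the
   same for dzbar), the Leibniz rule for d reads
     qdz (a b) = qdz a * qsig (qsig b) + a * qdz b.                        *)
Record qdisk (C : numClosedFieldType) (q : C) := QDisk {
  qA : algType C;
  qstar : qA -> qA;
  qz : qA;
  qzb : qA;
  qsig : qA -> qA;
  qdz : qA -> qA;
  qdzb : qA -> qA;
  qrel : qz * qzb = q ^- 2 *: (qzb * qz) - (q ^- 2) *: 1 + 1;
  qgen : forall P : qA -> Prop, P 1 -> P qz -> P qzb ->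
           (forall (c : C) a, P a -> P (c *: a)) ->
           (forall a b, P a -> P b -> P (a + b)) ->
           (forall a b, P a -> P b -> P (a * b)) -> forall a, P a;
  qstar_add : forall a b, qstar (a + b) = qstar a + qstar b;
  qstar_scale : forall (c : C) a, qstar (c *: a) = c^* *: qstar a;
  qstar_mul : forall a b, qstar (a * b) = qstar b * qstar a;
  qstar_invol : forall a, qstar (qstar a) = a;
  qstar_z : qstar qz = qzb;
  qsig_add : forall a b, qsig (a + b) = qsig a + qsig b;
  qsig_scale : forall (c : C) a, qsig (c *: a) = c *: qsig a;
  qsig_mul : forall a b, qsig (a * b) = qsig a * qsig b;
  qsig_one : qsig 1 = 1;
  qsig_z : qsig qz = q *: qz;
  qsig_zb : qsig qzb = q^-1 *: qzb;
  qdz_add : forall a b, qdz (a + b) = qdz a + qdz b;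
  qdz_scale : forall (c : C) a, qdz (c *: a) = c *: qdz a;
  qdz_leibniz : forall a b, qdz (a * b) = qdz a * qsig (qsig b) + a * qdz b;
  qdz_z : qdz qz = 1;
  qdz_zb : qdz qzb = 0;
  qdzb_add : forall a b, qdzb (a + b) = qdzb a + qdzb b;
  qdzb_scale : forall (c : C) a, qdzb (c *: a) = c *: qdzb a;
  qdzb_leibniz : forall a b, qdzb (a * b) = qdzb a * qsig (qsig b) + a * qdzb b;
  qdzb_z : qdzb qz = 0;
  qdzb_zb : qdzb qzb = 1
}.
Arguments qdisk : clear implicits.
Arguments qA {_ _} _.
Arguments qstar {_ _} _ _.
Arguments qz {_ _} _.
Arguments qzb {_ _} _.
Arguments qsig {_ _} _ _.
Arguments qdz {_ _} _ _.
Arguments qdzb {_ _} _ _.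

(* Coordinates in the free left modules:
   spinor Q  : phi = a s + b sbar            ~ (a, b)
   form1 Q   : xi  = a dz + b dzbar          ~ (a, b)                        *)
Definition spinor C q (Q : qdisk C q) := (qA Q * qA Q)%type.
Definition form1 C q (Q : qdisk C q) := (qA Q * qA Q)%type.

(* Omega^1 (x)_A S, free left module on dz(x)s, dz(x)sbar, dzbar(x)s, dzbar(x)sbar *)
Record omS (A : Type) := OmS { os1 : A; os2 : A; os3 : A; os4 : A }.
(* S (x)_A Omega^1, free left module on s(x)dz, s(x)dzbar, sbar(x)dz, sbar(x)dzbar *)
Record sOm (A : Type) := SOm { so1 : A; so2 : A; so3 : A; so4 : A }.

Section Ops.
Variables (C : numClosedFieldType) (q : C) (Q : qdisk C q).
Local Notation A := (qA Q).
Local Notation sg := (qsig Q).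
Local Notation st := (qstar Q).

Definition wQ : A := 1 - qzb Q * qz Q.

Definition lmulS (a : A) (phi : spinor Q) : spinor Q := (a * phi.1, a * phi.2).
Definition negS (phi : spinor Q) : spinor Q := (- phi.1, - phi.2).
Definition subS (phi psi : spinor Q) : spinor Q := (phi.1 - psi.1, phi.2 - psi.2).

(* star on Omega^1:  star(a dz + b dzbar) = dzbar star(a) + dz star(b)
   = sg(sg(star b)) dz + sg(sg(star a)) dzbar,  using (dz)^star = dzbar *)
Definition ostar (xi : form1 Q) : form1 Q :=
  (sg (sg (st xi.2)), sg (sg (st xi.1))).

(* xi (x) phi in Omega^1 (x)_A S, using dz.c = sg(sg c).dz *)
Definition tensorOS (xi : form1 Q) (phi : spinor Q) : omS A :=
  OmS (xi.1 * sg (sg phi.1)) (xi.1 * sg (sg phi.2))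
      (xi.2 * sg (sg phi.1)) (xi.2 * sg (sg phi.2)).

(* phi (x) xi in S (x)_A Omega^1, using s.c = sg c . s *)
Definition tensorSO (phi : spinor Q) (xi : form1 Q) : sOm A :=
  SOm (phi.1 * sg xi.1) (phi.1 * sg xi.2) (phi.2 * sg xi.1) (phi.2 * sg xi.2).

(* sigma_S : S (x) Omega^1 -> Omega^1 (x) S, left-linear, with
   s(x)dz |-> q dz(x)s, s(x)dzbar |-> q^-1 dzbar(x)s, and same with sbar
   (this is sigma_S(s (x) da) = q^{|a|} da (x) s on generators). *)
Definition sigmaS (x : sOm A) : omS A :=
  OmS (q *: so1 x) (q *: so3 x) (q^-1 *: so2 x) (q^-1 *: so4 x).

(* Clifford action (>) : Omega^1 (x) S -> S, bimodule map with
   dz > sbar = alpha w s, dzbar > s = beta w sbar, others 0 *)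
Definition clifford (alpha beta : C) (x : omS A) : spinor Q :=
  (alpha *: (os2 x * wQ), beta *: (os3 x * wQ)).

Definition cliffact (alpha beta : C) (xi : form1 Q) (phi : spinor Q) : spinor Q :=
  clifford alpha beta (tensorOS xi phi).

(* nabla_S (a s + b sbar) = da (x) s + db (x) sbar *)
Definition nablaS (phi : spinor Q) : omS A :=
  OmS (qdz Q phi.1) (qdz Q phi.2) (qdzb Q phi.1) (qdzb Q phi.2).

Definition Dirac (alpha beta : C) (phi : spinor Q) : spinor Q :=
  clifford alpha beta (nablaS phi).

(* J(a s + b sbar) = J(s).star(a) + J(sbar).star(b)
   = delta sg(star a) sbar - delta^-1 sg(star b) s *)
Definition Jop (delta : C) (phi : spinor Q) : spinor Q :=
  (- (delta^-1 *: sg (st phi.2)), delta *: sg (st phi.1)).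

Definition gammaS (phi : spinor Q) : spinor Q := (phi.1, - phi.2).

End Ops.

Arguments lmulS {C q} Q a phi.
Arguments negS {C q} Q phi.
Arguments subS {C q} Q phi psi.
Arguments ostar {C q} Q xi.
Arguments tensorOS {C q} Q xi phi.
Arguments tensorSO {C q} Q phi xi.
Arguments sigmaS {C q} Q x.
Arguments clifford {C q} Q alpha beta x.
Arguments cliffact {C q} Q alpha beta xi phi.
Arguments nablaS {C q} Q phi.
Arguments Dirac {C q} Q alpha beta phi.
Arguments Jop {C q} Q delta phi.
Arguments gammaS {C q} Q phi.
Arguments wQ {C q} Q.

(* Main.v *)
Require Import Defs.
From HB Require Import structures.
From mathcomp Require Import all_boot all_order all_algebra.
From mathcomp Require Import ring.
Import Order.TTheory GRing.Theory Num.Theory.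
Local Open Scope ring_scope.

Section L.
Variables (C : numClosedFieldType) (q : C) (hq : q \is Num.real) (hq0 : q != 0) (Q : qdisk C q).
Local Notation A := (qA Q).
Local Notation sg := (qsig Q).
Local Notation st := (qstar Q).
Local Notation dz := (qdz Q).
Local Notation dzb := (qdzb Q).

Lemma st0 : st 0 = 0.
Proof. by have := qstar_add (0:A) 0; rewrite addr0 => /eqP; rewrite -subr_eq subrr eq_sym => /eqP. Qed.
Lemma sg0 : sg 0 = 0.
Proof. by have := qsig_add (0:A) 0; rewrite addr0 => /eqP; rewrite -subr_eq subrr eq_sym => /eqP. Qed.
Lemma dz0 : dz 0 = 0.
Proof. by have := qdz_add (0:A) 0; rewrite addr0 => /eqP; rewrite -subr_eq subrr eq_sym => /eqP. Qed.
Lemma dzb0 : dzb 0 = 0.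
Proof. by have := qdzb_add (0:A) 0; rewrite addr0 => /eqP; rewrite -subr_eq subrr eq_sym => /eqP. Qed.
Lemma stN x : st (- x) = - st x.
Proof. by apply/eqP; rewrite -addr_eq0 -qstar_add addNr st0. Qed.
Lemma sgN x : sg (- x) = - sg x.
Proof. by apply/eqP; rewrite -addr_eq0 -qsig_add addNr sg0. Qed.
Lemma dzN x : dz (- x) = - dz x.
Proof. by apply/eqP; rewrite -addr_eq0 -qdz_add addNr dz0. Qed.
Lemma dzbN x : dzb (- x) = - dzb x.
Proof. by apply/eqP; rewrite -addr_eq0 -qdzb_add addNr dzb0. Qed.
Lemma st1 : st 1 = 1.
Proof. have := qstar_mul (st 1) 1. rewrite mulr1 !qstar_invol (@mulr1 (qA Q)). by []. Qed.
Lemma dz1 : dz 1 = 0.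
Proof.
have := @qdz_leibniz _ _ Q 1 1; rewrite mulr1 !qsig_one mulr1 mul1r => /eqP.
by rewrite -subr_eq subrr eq_sym => /eqP.
Qed.
Lemma dzb1 : dzb 1 = 0.
Proof.
have := @qdzb_leibniz _ _ Q 1 1; rewrite mulr1 !qsig_one mulr1 mul1r => /eqP.
by rewrite -subr_eq subrr eq_sym => /eqP.
Qed.
Lemma qc : q^* = q. Proof. exact: conj_Creal. Qed.
Lemma qVc : q^-1^* = q^-1. Proof. by rewrite conj_Creal // rpredV. Qed.

Lemma stsg a : sg (st (sg a)) = st a.
Proof.
elim/(@qgen _ _ Q): a.
- by rewrite qsig_one st1 qsig_one.
- by rewrite qsig_z qstar_scale qstar_z qsig_scale qsig_zb qc scalerA mulfV // scale1r.
- by rewrite qsig_zb qstar_scale -{1}(qstar_z Q) qstar_invol qsig_scale qsig_z qVc scalerA mulVf // scale1r -(qstar_z Q) qstar_invol.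
- by move=> c a IH; rewrite qsig_scale !qstar_scale qsig_scale IH.
- by move=> a b IHa IHb; rewrite qsig_add !qstar_add qsig_add IHa IHb.
- by move=> a b IHa IHb; rewrite qsig_mul !qstar_mul qsig_mul IHa IHb.
Qed.

Lemma wst : st (wQ Q) = wQ Q.
Proof. by rewrite /wQ qstar_add st1 stN qstar_mul qstar_z -{2}(qstar_z Q) qstar_invol. Qed.
Lemma wsg : sg (wQ Q) = wQ Q.
Proof.
rewrite /wQ qsig_add qsig_one sgN qsig_mul qsig_z qsig_zb -scalerAl -scalerAr scalerA.
by rewrite mulVf // scale1r.
Qed.
Lemma sgstw : sg (st (wQ Q)) = wQ Q.
Proof. by rewrite wst wsg. Qed.

Lemma wcomm a : wQ Q * a = sg (sg a) * wQ Q.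
Proof.
elim/(@qgen _ _ Q): a.
- by rewrite !qsig_one mulr1 mul1r.
- rewrite !qsig_z !qsig_scale qsig_z scalerA /wQ.
  rewrite mulrBl mulrBr mul1r mulr1 -scalerAl mulrA (qrel Q) !mulrDl !scalerAl !mul1r.
  rewrite !mulNr -!scalerAl !mul1r !scalerDr scalerN !scalerA.
  have e : q * q * q ^- 2 = 1 by rewrite -expr2 mulfV // expf_neq0.
  rewrite e !scale1r.
  by rewrite [_ - _ + _]addrC opprD addrA subrr add0r opprB.
- rewrite !qsig_zb !qsig_scale qsig_zb scalerA /wQ.
  rewrite mulrBl mulrBr mul1r mulr1 -mulrA (qrel Q) !mulrDr !mulrN !mulr1.
  rewrite -!scalerAr -!scalerAl !mulrA.
  have e : q^-1 * q^-1 = q ^- 2 by rewrite -invfM -expr2.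
  rewrite e.
  by rewrite mulr1 [_ - _ + _]addrC opprD addrA subrr add0r opprB.
- by move=> c a IH; rewrite -scalerAr IH !qsig_scale -!scalerAl.
- by move=> a b IHa IHb; rewrite mulrDr IHa IHb !qsig_add mulrDl.
- by move=> a b IHa IHb; rewrite mulrA IHa -mulrA IHb !qsig_mul mulrA.
Qed.
Lemma sg3st2 b : sg (sg (sg (st (sg (sg b))))) = sg (st b).
Proof. by rewrite stsg stsg. Qed.

Lemma dzJ a : dz (sg (st a)) = q *: sg (sg (sg (st (dzb a)))).
Proof.
elim/(@qgen _ _ Q): a.
- by rewrite st1 qsig_one dz1 dzb1 st0 !sg0 scaler0.
- by rewrite qstar_z qsig_zb qdz_scale qdz_zb qdzb_z st0 !sg0 !scaler0.
- rewrite -{1}(qstar_z Q) qstar_invol qsig_z qdz_scale qdz_z qdzb_zb st1.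
  by rewrite !qsig_one.
- move=> c a IH; rewrite !qstar_scale qsig_scale qdz_scale IH qdzb_scale qstar_scale.
  by rewrite !qsig_scale !scalerA mulrC.
- move=> a b IHa IHb; rewrite !qstar_add qsig_add qdz_add IHa IHb qdzb_add qstar_add.
  by rewrite !qsig_add scalerDr.
- move=> a b IHa IHb; rewrite qstar_mul qsig_mul qdz_leibniz IHa IHb qdzb_leibniz.
  rewrite qstar_add !qstar_mul !qsig_add !qsig_mul sg3st2 scalerDr.
  by rewrite -scalerAl -scalerAr addrC.
Qed.

Lemma dzbJ a : dzb (sg (st a)) = q^-1 *: sg (sg (sg (st (dz a)))).
Proof.
elim/(@qgen _ _ Q): a.
- by rewrite st1 qsig_one dzb1 dz1 st0 !sg0 scaler0.
- by rewrite qstar_z qsig_zb qdzb_scale qdzb_zb qdz_z st1 !qsig_one.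
- rewrite -{1}(qstar_z Q) qstar_invol qsig_z qdzb_scale qdzb_z qdz_zb st0.
  by rewrite !sg0 !scaler0.
- move=> c a IH; rewrite !qstar_scale qsig_scale qdzb_scale IH qdz_scale qstar_scale.
  by rewrite !qsig_scale !scalerA mulrC.
- move=> a b IHa IHb; rewrite !qstar_add qsig_add qdzb_add IHa IHb qdz_add qstar_add.
  by rewrite !qsig_add scalerDr.
- move=> a b IHa IHb; rewrite qstar_mul qsig_mul qdzb_leibniz IHa IHb qdz_leibniz.
  rewrite qstar_add !qstar_mul !qsig_add !qsig_mul sg3st2 scalerDr.
  by rewrite -scalerAl -scalerAr addrC.
Qed.
End L.

Lemma hconj (C : numClosedFieldType) (q d a b : C) (hq : q \is Num.real) (hd : d \is Num.real)
 (hrel : d ^+ 2 * q * a = - b^*) : d ^+ 2 * q * a^* = - b.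
Proof.
have e := congr1 (@Num.conj C) hrel.
rewrite !rmorphM rmorphN /= conjCK (conj_Creal hd) (conj_Creal hq) in e.
by rewrite expr2.
Qed.

Theorem mainTheorem9 (C : numClosedFieldType) (q : C)
  (hq : q \is Num.real) (hq0 : q != 0) (Q : qdisk C q)
  (alpha beta delta : C) (hd : delta \is Num.real) (hd0 : delta != 0)
  (hrel : delta ^+ 2 * q * alpha = - beta^*) :
  let D := Dirac Q alpha beta in
  let J := Jop Q delta in
  let g := gammaS Q in
  (forall (xi : form1 Q) (phi : spinor Q),
      J (cliffact Q alpha beta xi phi)
      = clifford Q alpha beta (sigmaS Q (tensorSO Q (J phi) (ostar Q xi)))) /\
  (forall a : qA Q, D (a, 0) = (0, beta *: (qdzb Q a * wQ Q))) /\
  (forall a : qA Q, D (0, a) = (alpha *: (qdz Q a * wQ Q), 0)) /\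
  (forall phi : spinor Q, J (J phi) = negS Q phi) /\
  (forall phi : spinor Q, J (g phi) = negS Q (g (J phi))) /\
  (forall phi : spinor Q, g (g phi) = phi) /\
  (forall (a : qA Q) (phi : spinor Q), g (lmulS Q a phi) = lmulS Q a (g phi)) /\
  (forall phi : spinor Q, D (g phi) = negS Q (g (D phi))) /\
  (forall Jinv : spinor Q -> spinor Q, cancel J Jinv -> cancel Jinv J ->
     forall (a b : qA Q) (phi : spinor Q),
       lmulS Q a (J (lmulS Q b (Jinv phi))) = J (lmulS Q b (Jinv (lmulS Q a phi)))) /\
  (forall phi : spinor Q, J (D phi) = D (J phi)) /\
  (forall Jinv : spinor Q -> spinor Q, cancel J Jinv -> cancel Jinv J ->
     forall (a b : qA Q) (phi : spinor Q),
       let K := fun psi => J (lmulS Q b (Jinv psi)) in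
       let Da := fun psi => subS Q (D (lmulS Q a psi)) (lmulS Q a (D psi)) in
       Da (K phi) = K (Da phi)).
Proof.
move=> D J g.






have stsg' := @stsg C q hq hq0 Q.
have wcomm' := @wcomm C q hq0 Q.
have wst' := @wst C q Q.
have wsg' := @wsg C q hq0 Q.
have dzJ' := @dzJ C q hq hq0 Q.
have dzbJ' := @dzbJ C q hq hq0 Q.
have hrel' := @hconj C q delta alpha beta hq hd hrel.
have ea : alpha^* = - beta / (delta ^+ 2 * q).
  by rewrite -hrel' mulrC mulKf // mulf_neq0 // expf_neq0.
have eb : beta^* = - (delta ^+ 2 * q * alpha) by rewrite hrel opprK.
split.
  case=> x1 x2 [p1 p2].
  rewrite /J /Jop /cliffact /clifford /tensorOS /sigmaS /tensorSO /ostar /=.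
  rewrite !qstar_scale !qstar_mul !qsig_scale !qsig_mul !wst' !wsg' !stsg'.
  congr (_, _).
    rewrite mulrA wcomm' stsg' -mulrA wcomm' mulrA.
    rewrite -!scalerAl !scalerA -scaleNr; congr (_ *: _).
    rewrite eb; field; exact: hd0.
  rewrite mulrA wcomm' stsg' -mulrA wcomm' mulrA.
  rewrite -!scalerAl !mulNr -!scalerAl !scalerN !scalerA -scaleNr; congr (_ *: _).
  rewrite ea; field; rewrite hq0 hd0 //.
have dVc : delta^-1^* = delta^-1 by rewrite conj_Creal // rpredV.
have dc : delta^* = delta by rewrite conj_Creal.
split.
  by move=> a; rewrite /D /Dirac /clifford /nablaS /= dz0 mul0r scaler0.
split.
  by move=> a; rewrite /D /Dirac /clifford /nablaS /= dzb0 mul0r scaler0.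
split.
  case=> p1 p2; rewrite /J /Jop /negS /=; congr (_, _).
    by rewrite !qstar_scale !qsig_scale stsg' qstar_invol dc scalerA mulVf // scale1r.
  rewrite stN sgN !qstar_scale !qsig_scale stsg' qstar_invol dVc scalerN scalerA.
  by rewrite mulfV // scale1r.
split.
  by case=> p1 p2; rewrite /J /Jop /negS /g /gammaS /= stN sgN scalerN !opprK.
split.
  by case=> p1 p2; rewrite /g /gammaS /= opprK.
split.
  by move=> a [p1 p2]; rewrite /g /gammaS /lmulS /= mulrN.
split.
  case=> p1 p2; rewrite /D /Dirac /clifford /nablaS /negS /g /gammaS /=.
  by rewrite dzN mulNr scalerN opprK.
have JmulL : forall (b : qA Q) (chi : spinor Q),
    J (lmulS Q b chi) = ((J chi).1 * qsig Q (qstar Q b), (J chi).2 * qsig Q (qstar Q b)).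
  move=> b [c1 c2]; rewrite /J /Jop /lmulS /= !qstar_mul !qsig_mul.
  by rewrite mulNr -!scalerAl.
split.
  move=> Jinv h1 h2 a b phi.
  set psi := Jinv phi.
  have ephi : phi = J psi by rewrite /psi h2.
  have eA : lmulS Q a phi = J (psi.1 * qsig Q (qstar Q a), psi.2 * qsig Q (qstar Q a)).
    rewrite ephi; case: (psi) => c1 c2; rewrite /J /Jop /lmulS /= !qstar_mul !qsig_mul.
    by rewrite stsg' qstar_invol mulrN -!scalerAr.
  rewrite eA h1 !JmulL.
  case: (psi) => c1 c2; rewrite /J /Jop /lmulS /= !qstar_mul !qsig_mul.
  rewrite stsg' qstar_invol.
  by rewrite !mulNr !mulrN -!scalerAl -!scalerAr !mulrA.
split.
  case=> p1 p2; rewrite /J /Jop /D /Dirac /clifford /nablaS /=; congr (_, _).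
    rewrite !qstar_scale !qsig_scale !qstar_mul !qsig_mul wst' wsg' wcomm'.
    rewrite qdz_scale dzJ' -!scalerAl !scalerA -scaleNr; congr (_ *: _).
    rewrite eb; field; exact: hd0.
  rewrite !qstar_scale !qsig_scale !qstar_mul !qsig_mul wst' wsg' wcomm'.
  rewrite dzbN qdzb_scale dzbJ' mulNr -!scalerAl scalerN !scalerA -scaleNr; congr (_ *: _).
  rewrite ea; field; rewrite hq0 hd0 //.
move=> Jinv h1 h2 a b phi K Da.
have KE : forall psi, K psi = (psi.1 * qsig Q (qstar Q b), psi.2 * qsig Q (qstar Q b)).
  by move=> psi; rewrite /K JmulL h2.
have wr : forall x y : qA Q, x * qsig Q (qsig Q y) * wQ Q = x * wQ Q * y.
  by move=> x y; rewrite -mulrA -wcomm' mulrA.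
have DaE : forall psi, Da psi = (alpha *: (qdz Q a * qsig Q (qsig Q psi.2) * wQ Q),
                                 beta *: (qdzb Q a * qsig Q (qsig Q psi.1) * wQ Q)).
  case=> p1 p2; rewrite /Da /D /Dirac /clifford /nablaS /subS /lmulS /=.
  rewrite qdz_leibniz qdzb_leibniz !mulrDl !scalerDr -!scalerAr !mulrA !addrK.
  by [].
rewrite KE DaE KE DaE /= !qsig_mul !mulrA !wr -!scalerAl.
by [].
Qed.
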